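(* Let $n\ge3$. There is no weight-preserving bijection $\Phi$ from the set of arrowed monotone triangles with bottom row $(1,\dots,n)$ to the set of SBCSPPs of order $n$ such that the map sending each DPP-SBCSPP $D$ to the monotone triangle obtained from $\Phi^{-1}(D)$ by forgetting all decorations is a bijection from the set of DPP-SBCSPPs of order $n$ onto the set of monotone triangles with bottom row $(1,\dots,n)$.
   Context: A monotone triangle with $n$ rows is an array $(m_{i,j})_{1\le j\le i\le n}$ of integers with $m_{i+1,j}\le m_{i,j}\le m_{i+1,j+1}$, $m_{i,j}<m_{i,j+1}$; row $n$ is the bottom row; northwest/northeast-neighbours of $m_{i,j}$ are $m_{i-1,j-1}$, $m_{i-1,j}$. An arrowed monotone triangle decorates each entry by one of $\nwarrow,\nearrow,\nwarrow\!\nearrow$ with: an entry equal to its northwest-neighbour carries $\nearrow$; an entry equal to its northeast-neighbour carries $\nwarrow$. Weight: $u^{\#\nearrow}v^{\#\nwarrow}w^{\#\nwarrow\nearrow}\prod_i X_i^{(\text{sum of row } i)-(\text{sum of row } i-1)+(\#\nearrow\text{ in row }i)-(\#\nwarrow\text{ in row }i)}$. A near-balanced partition $(a_1,\dots,a_l\mid b_1,\dots,b_l)$ (Frobenius notation) has $a_i\in\{b_i,b_i+1\}$; $\mathrm{W}(\lambda)=w^{l+\sum(b_i-a_i)}$. An SBCSPP of order $n$ is a filling of a near-balanced shape with nonempty subsets of $\{1,\dots,n\}$, singletons strictly above the diagonal, row maxima weakly decreasing left to right, and columns strictly decreasing (all elements of an upper cell exceed all elements of the cell below). Weight: $\mathrm{W}(\lambda)\,u^{\#\text{cells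 strictly above diagonal}}\,v^{\binom{n+1}{2}-\#\text{entries on/below diagonal}}\,w^{\#\text{entries}-\#\text{cells}}\prod_iX_i^{\#\,i\text{'s}}$. A DPP-SBCSPP is an SBCSPP in which every cell is a singleton, the shape satisfies $a_i=b_i+1$ for all $i$, below each diagonal entry $d$ the entries in its column are $d-1,d-2,\dots,1$ (so that column has exactly $d-1$ cells below the diagonal), and no $1$ appears strictly above the diagonal. A bijection is weight-preserving if it maps each object to one of the same weight. *)

(* Defs.v *)
From mathcomp Require Import all_boot all_order all_algebra.
Set Implicit Arguments. Unset Strict Implicit. Unset Printing Implicit Defensive.
Import GRing.Theory Num.Theory.

(* A weight is a Laurent monomial
     u^eu v^ev w^ew X_1^e_1 ... X_n^e_n
   represented by its exponent vector; two weights are equal iff the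
   monomials are equal.  [exp_X] is the list (e_1, ..., e_n).          *)
Record monomial := Monomial {
  exp_u : int; exp_v : int; exp_w : int; exp_X : seq int }.

(* Monotone triangles: a list of rows (top row first); row i (0-indexed)
   has length i+1.  Entry m_{i+1,j+1} of the paper is [mt_entry t i j].   *)
Definition MT := seq (seq nat).

Definition mt_entry (t : MT) (i j : nat) : nat := nth 0 (nth [::] t i) j.

Definition is_MT (n : nat) (t : MT) : Prop :=
  [/\ size t = n,
      (forall i, i < n -> size (nth [::] t i) = i.+1),
      nth [::] t n.-1 = iota 1 n,
      (forall i j, i.+1 < n -> j <= i ->
          mt_entry t i.+1 j <= mt_entry t i j /\ mt_entry t i j <= mt_entry t i.+1 j.+1)
    & (forall i j, i < n -> j < i -> mt_entry t i j < mt_entry t i j.+1)].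

(* Arrow decorations: AN = north-west arrow, AE = north-east arrow,
   ANE = both arrows. *)
Inductive arrow := ANW | ANE | ABoth.

Definition isNW (a : arrow) : bool := if a is ANW then true else false.
Definition isNE (a : arrow) : bool := if a is ANE then true else false.
Definition isBoth (a : arrow) : bool := if a is ABoth then true else false.

Definition AMT := seq (seq (nat * arrow)).

Definition forget (T : AMT) : MT := map (map fst) T.

Definition amt_arrow (T : AMT) (i j : nat) : arrow := (nth (0, ANW) (nth [::] T i) j).2.

(* Entry (i,j) (0-indexed) has north-west neighbour (i-1,j-1) and
   north-east neighbour (i-1,j). *)
Definition is_AMT (n : nat) (T : AMT) : Prop :=
  is_MT n (forget T) /\
  (forall i j, 0 < i < n -> j <= i ->
     (0 < j -> mt_entry (forget T) i j = mt_entry (forget T) i.-1 j.-1 ->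
        amt_arrow T i j = ANE) /\
     (j < i -> mt_entry (forget T) i j = mt_entry (forget T) i.-1 j ->
        amt_arrow T i j = ANW)).

(* row i, 1-indexed; row 0 is empty *)
Definition row1 (A : Type) (s : seq (seq A)) (i : nat) : seq A :=
  if i is k.+1 then nth [::] s k else [::].

Definition rowsum (r : seq (nat * arrow)) : nat := sumn (map fst r).

Definition count_arrow (p : arrow -> bool) (T : AMT) : nat :=
  sumn (map (fun r => count (fun e => p e.2) r) T).

Definition amt_expX (T : AMT) (i : nat) : int :=
  ((rowsum (row1 T i))%:Z - (rowsum (row1 T i.-1))%:Z
  + (count (fun e => isNE e.2) (row1 T i))%:Z
  - (count (fun e => isNW e.2) (row1 T i))%:Z)%R.

Definition amt_weight (n : nat) (T : AMT) : monomial :=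
  Monomial (count_arrow isNE T)%:Z (count_arrow isNW T)%:Z
           (count_arrow isBoth T)%:Z
           [seq amt_expX T i | i <- iota 1 n].

(* Fillings of partition shapes: a list of rows (top first), each row a
   list of cells, each cell a subset of {1..n} represented canonically by
   its strictly increasing list of elements.  Cell (i,j) is 0-indexed
   (row i, column j); the shape is lambda = map size F.                   *)
Definition SBC := seq (seq (seq nat)).

Definition shape (F : SBC) : seq nat := map size F.

Definition cell (F : SBC) (i j : nat) : seq nat := nth [::] (nth [::] F i) j.

Definition in_shape (F : SBC) (i j : nat) : bool :=
  (i < size F) && (j < size (nth [::] F i)).

Definition is_partition (l : seq nat) : Prop :=
  (forall i, i < size l -> 0 < nth 0 l i) /\ sorted geq l.

(* Frobenius coordinates (a_1..a_d | b_1..b_d), here 0-indexed: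
   d = Durfee size, a k = lambda_{k+1} - (k+1), b k = lambda'_{k+1} - (k+1). *)
Definition durfee (l : seq nat) : nat := count (fun i => i < nth 0 l i) (iota 0 (size l)).
Definition conjpart (l : seq nat) (j : nat) : nat := count (fun r => j < r) l.
Definition frob_a (l : seq nat) (k : nat) : nat := nth 0 l k - k.+1.
Definition frob_b (l : seq nat) (k : nat) : nat := conjpart l k - k.+1.

Definition near_balanced (l : seq nat) : Prop :=
  is_partition l /\
  forall k, k < durfee l -> frob_a l k = frob_b l k \/ frob_a l k = (frob_b l k).+1.

Definition is_SBC (n : nat) (F : SBC) : Prop :=
  [/\ near_balanced (shape F),
      (forall i j, in_shape F i j ->
         [/\ cell F i j != [::], sorted ltn (cell F i j)
           & all (fun x => 0 < x <= n) (cell F i j)]),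
      (forall i j, in_shape F i j -> i < j -> size (cell F i j) = 1),
      (forall i j, in_shape F i j.+1 ->
         \max_(x <- cell F i j.+1) x <= \max_(x <- cell F i j) x)
    &
      (forall i j x y, in_shape F i.+1 j -> x \in cell F i j ->
         y \in cell F i.+1 j -> y < x)].

Definition W_exp (l : seq nat) : int :=
  ((durfee l)%:Z + \sum_(k < durfee l) ((frob_b l k)%:Z - (frob_a l k)%:Z))%R.

Definition cells_above (F : SBC) : nat :=
  \sum_(i < size F) \sum_(j < size (nth [::] F i) | i < j) 1.
Definition entries_onbelow (F : SBC) : nat :=
  \sum_(i < size F) \sum_(j < size (nth [::] F i) | j <= i) size (cell F i j).
Definition n_entries (F : SBC) : nat :=
  \sum_(i < size F) \sum_(j < size (nth [::] F i)) size (cell F i j).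
Definition n_cells (F : SBC) : nat := sumn (shape F).
Definition count_val (F : SBC) (v : nat) : nat :=
  \sum_(i < size F) \sum_(j < size (nth [::] F i)) count_mem v (cell F i j).

Definition sbc_weight (n : nat) (F : SBC) : monomial :=
  Monomial (cells_above F)%:Z
           ('C(n.+1, 2)%:Z - (entries_onbelow F)%:Z)%R
           (W_exp (shape F) + (n_entries F)%:Z - (n_cells F)%:Z)%R
           [seq ((count_val F i)%:Z)%R | i <- iota 1 n].

Definition is_DPP (n : nat) (F : SBC) : Prop :=
  [/\ is_SBC n F,
      (forall i j, in_shape F i j -> size (cell F i j) = 1),
      (forall k, k < durfee (shape F) -> frob_a (shape F) k = (frob_b (shape F) k).+1),
      (forall k, k < durfee (shape F) -> exists d, forall t,
          (in_shape F (k + t) k <-> t < d) /\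
          (t < d -> cell F (k + t) k = [:: d - t]))
    & (forall i j, in_shape F i j -> i < j -> 1 \notin cell F i j)].

Definition bij_on (A B : Type) (P : A -> Prop) (Q : B -> Prop) (f : A -> B) : Prop :=
  [/\ (forall x, P x -> Q (f x)),
      (forall x y, P x -> P y -> f x = f y -> x = y)
    & (forall y, Q y -> exists x, P x /\ f x = y)].

(* Main.v *)
Require Import Defs.
From mathcomp Require Import all_boot all_order all_algebra.
From mathcomp Require Import zify.
Set Implicit Arguments. Unset Strict Implicit. Unset Printing Implicit Defensive.
Import GRing.Theory.

Definition mrow (i : nat) : seq nat :=
  if i is 0 then [:: 1] else if i is 1 then [:: 1; 3] else iota 1 i.+1.
Definition mstar n : MT := map mrow (iota 0 n).

Lemma nth_mstar n i : i < n -> nth [::] (mstar n) i = mrow i.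
Proof. by move=> H; rewrite (nth_map 0) ?size_iota // nth_iota. Qed.

Lemma size_mrow i : size (mrow i) = i.+1.
Proof. by case: i => [|[|i]] //=; rewrite size_iota. Qed.

Lemma mrow_big i j : 2 <= i -> j <= i -> nth 0 (mrow i) j = j.+1.
Proof.
case: i => [|[|i]] // _ Hj; rewrite /mrow nth_iota //; lia.
Qed.

Lemma mt_entry_mstar n i j : i < n -> mt_entry (mstar n) i j = nth 0 (mrow i) j.
Proof. by move=> H; rewrite /mt_entry nth_mstar. Qed.

Lemma is_MT_mstar n : 3 <= n -> is_MT n (mstar n).
Proof.
move=> Hn; split.
- by rewrite size_map size_iota.
- by move=> i Hi; rewrite nth_mstar // size_mrow.
- rewrite nth_mstar; last by lia.
  by case: n Hn => [|[|[|n]]].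
- move=> i j Hi Hj; rewrite !mt_entry_mstar; try lia.
  case: i Hi Hj => [|[|i]] Hi Hj.
  + by case: j Hj.
  + by case: j Hj => [|[|j]].
  + rewrite !mrow_big //; lia.
- move=> i j Hi Hj; rewrite !mt_entry_mstar //.
  case: i Hi Hj => [|[|i]] Hi Hj //.
  + by case: j Hj.
  + rewrite !mrow_big //; lia.
Qed.


Lemma count_forced (r : seq (nat * arrow)) k :
  k <= size r -> (forall j, j < k -> (nth (0, ANW) r j).2 = ANW) ->
  k <= count (fun e => isNW e.2) r.
Proof.
move=> Hk Hf; rewrite -(cat_take_drop k r) count_cat.
have : count (fun e => isNW e.2) (take k r) = size (take k r).
  apply/eqP; rewrite -all_count; apply/(all_nthP (0, ANW)) => j.
  rewrite size_take => Hj.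
  have Hjk : j < k by move: Hj; case: ifP => H; lia.
  by rewrite nth_take // Hf.
move=> ->; rewrite size_take; case: ifP => _; lia.
Qed.

Lemma count_NE_NW (r : seq (nat * arrow)) :
  count (fun e => isNE e.2) r + count (fun e => isNW e.2) r <= size r.
Proof. elim: r => //= [[x a] r IH]; case: a => /=; lia. Qed.

Lemma sumn_mrow_S i : 2 <= i -> sumn (mrow i.+1) = sumn (mrow i) + i.+2.
Proof.
case: i => [|[|i]] // _. rewrite /mrow. have -> : i.+4 = i.+3 + 1 by lia. rewrite iotaD sumn_cat /=. lia.
Qed.

Section AMT.
Variables (n : nat) (T : AMT).
Hypothesis Hn : 3 <= n.
Hypothesis HT : is_AMT n T.
Hypothesis HF : forget T = mstar n.

Lemma sizeT : size T = n.
Proof. by rewrite -(size_map (map fst)) -/(forget T) HF size_map size_iota. Qed.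

Lemma rowT i : i < n -> map fst (nth [::] T i) = mrow i.
Proof.
move=> Hi; rewrite -(nth_map [::] [::]) ?sizeT // -/(forget T) HF nth_mstar //.
Qed.

Lemma size_rowT i : i < n -> size (nth [::] T i) = i.+1.
Proof. by move=> Hi; rewrite -(size_map fst) rowT // size_mrow. Qed.

Lemma rowsumT i : i < n -> rowsum (nth [::] T i) = sumn (mrow i).
Proof. by move=> Hi; rewrite /rowsum rowT. Qed.

Lemma forcedT i k : 0 < i < n -> k <= i ->
  (forall j, j < k -> nth 0 (mrow i) j = nth 0 (mrow i.-1) j) ->
  k <= count (fun e => isNW e.2) (nth [::] T i).
Proof.
move=> Hi Hk Hj; apply: count_forced; first by rewrite size_rowT; lia.
move=> j Hjk; have := (proj2 HT i j Hi ltac:(lia)).2 ltac:(lia).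
rewrite HF !mt_entry_mstar; try lia. by move=> /(_ (Hj j Hjk)).
Qed.

Definition cNE (r : seq (nat * arrow)) : int := (count (fun e => isNE e.2) r)%:Z.
Definition cNW (r : seq (nat * arrow)) : int := (count (fun e => isNW e.2) r)%:Z.

Lemma expX_eq i : 0 < i < n ->
  amt_expX T i.+1 = ((sumn (mrow i))%:Z - (sumn (mrow i.-1))%:Z
                     + cNE (nth [::] T i) - cNW (nth [::] T i))%R.
Proof.
move=> Hi; rewrite /amt_expX /=. case: i Hi => [|i] Hi //=.
by rewrite !rowsumT //; lia.
Qed.

Lemma expX_bound i k : 0 < i < n -> k <= i ->
  (forall j, j < k -> nth 0 (mrow i) j = nth 0 (mrow i.-1) j) ->
  (amt_expX T i.+1 <= (sumn (mrow i))%:Z - (sumn (mrow i.-1))%:Z + i.+1%:Z - 2 * k%:Z)%R.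
Proof.
move=> Hi Hk Hj; rewrite expX_eq //.
have H1 := forcedT Hi Hk Hj.
have H2 := count_NE_NW (nth [::] T i). rewrite size_rowT in H2; last by lia.
rewrite /cNE /cNW. lia.
Qed.

Lemma expX_lower i : 0 < i < n ->
  ((sumn (mrow i))%:Z - (sumn (mrow i.-1))%:Z - i.+1%:Z <= amt_expX T i.+1)%R.
Proof.
move=> Hi; rewrite expX_eq //.
have H2 := count_NE_NW (nth [::] T i). rewrite size_rowT in H2; last by lia.
rewrite /cNE /cNW. lia.
Qed.

Lemma X_upper v : 0 < v <= n ->
  (amt_expX T v <= (2 + (v == 2%N) + (v == 3%N))%N%:Z)%R.
Proof.
case: v => [|[|[|[|v]]]] // Hv.
- rewrite /amt_expX /= rowsumT; last by lia.
  have H2 := count_NE_NW (nth [::] T 0). rewrite size_rowT in H2; last by lia.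
  rewrite /rowsum /=; lia.
- have := @expX_bound 1 1 ltac:(lia) (leqnn _) ltac:(by case).
  rewrite /=; lia.
- have := @expX_bound 2 1 ltac:(lia) ltac:(lia) ltac:(by case).
  rewrite /=; lia.
- have := @expX_bound v.+3 v.+3 ltac:(lia) (leqnn _).
  have HS := @sumn_mrow_S v.+2 ltac:(lia).
  rewrite /= in HS. rewrite /= HS.
  have H : forall j, j < v.+3 -> nth 0 (mrow v.+3) j = nth 0 (mrow v.+2) j.
    by move=> j Hj; rewrite !mrow_big //; lia.
  move=> /(_ H). lia.
Qed.

Lemma X2_lower : (1 <= amt_expX T 2)%R.
Proof. have := @expX_lower 1 ltac:(lia). rewrite /=; lia. Qed.

Lemma X1_cases : amt_expX T 1 = 0%R \/ amt_expX T 1 = 2%R \/ 0 < count_arrow isBoth T.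
Proof.
have Hr := rowT (i:=0) ltac:(lia). have Hs := size_rowT (i:=0) ltac:(lia).
have HB : count (fun e => isBoth e.2) (nth [::] T 0) <= count_arrow isBoth T.
  rewrite /count_arrow; case: T sizeT => [|r0 rs] /=; first lia. move=> _; lia.
move: Hr Hs HB; rewrite /amt_expX /=.
case: (nth [::] T 0) => [|[x a] [|]] //= [->] _; case: a => /= HB; rewrite /rowsum /=; lia.
Qed.

End AMT.


Section Shape.
Variable F : SBC.
Hypothesis HP : is_partition (Defs.shape F).

Lemma nth_shape i : i < size F -> nth 0 (Defs.shape F) i = size (nth [::] F i).
Proof. by move=> Hi; rewrite /Defs.shape (nth_map [::]). Qed.

Lemma size_shape : size (Defs.shape F) = size F.
Proof. by rewrite size_map. Qed.

Lemma row_pos i : i < size F -> 0 < size (nth [::] F i).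
Proof. by move=> Hi; rewrite -nth_shape //; apply: HP.1; rewrite size_shape. Qed.

Lemma row_mono i i' : i <= i' -> i' < size F ->
  size (nth [::] F i') <= size (nth [::] F i).
Proof.
move=> Hii' Hi'; rewrite -!nth_shape //; last by lia.
have := @sorted_leq_nth _ geq _ _ 0 _ HP.2.
have Ht : transitive geq by move=> a b c /= H1 H2; apply: leq_trans H2 H1.
move=> /(_ Ht (@leqnn)) H; apply: (H i i'); rewrite // inE size_shape; lia.
Qed.

Lemma in_shape_mono i j i' j' : in_shape F i j -> i' <= i -> j' <= j -> in_shape F i' j'.
Proof.
move=> /andP [Hi Hj] H1 H2; apply/andP; split; first by lia.
have := row_mono H1 Hi; lia.
Qed.

Lemma durfee_gt k : k < size F -> k < size (nth [::] F k) -> k < durfee (Defs.shape F).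
Proof.
move=> Hk Hkk; rewrite /durfee size_shape.
have -> : size F = k.+1 + (size F - k.+1) by lia.
rewrite iotaD count_cat.
have -> : count (fun i => i < nth 0 (Defs.shape F) i) (iota 0 k.+1) = k.+1.
  apply/eqP; rewrite -{2}(size_iota 0 k.+1) -all_count; apply/allP => i.
  rewrite mem_iota => /andP [_ Hi]; rewrite nth_shape; last by lia.
  have := row_mono (i:=i) (i':=k) ltac:(lia) Hk; lia.
lia.
Qed.

Lemma conjpart0 : conjpart (Defs.shape F) 0 = size F.
Proof.
rewrite /conjpart -size_shape; apply/eqP; rewrite -all_count.
apply/(all_nthP 0) => i Hi; apply: HP.1 => //.
Qed.

End Shape.


Lemma count_val_ge F v i j : in_shape F i j -> count_mem v (cell F i j) <= count_val F v.
Proof.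
move=> /andP [Hi Hj]; rewrite /count_val (bigD1 (Ordinal Hi)) //=.
rewrite (bigD1 (Ordinal Hj)) //=. rewrite -addnA; exact: leq_addr.
Qed.

Lemma sum_ind_ord s a : \sum_(i < s) (i == a :> nat) = (a < s).
Proof.
elim: s => [|s IH]; first by rewrite big_ord0.
rewrite big_ord_recr /= IH; case: (ltngtP a s) => H; lia.
Qed.

Lemma count_val_le_ind F v a b :
  (forall i j, in_shape F i j -> count_mem v (cell F i j) <= (i == a) * (j == b)) ->
  count_val F v <= 1.
Proof.
move=> H; rewrite /count_val.
apply: (@leq_trans (\sum_(i < size F) ((i : nat) == a : nat))); last first.
  rewrite sum_ind_ord; lia.
apply: leq_sum => i _.
apply: (@leq_trans (\sum_(j < size (nth [::] F i)) ((i:nat) == a) * ((j:nat) == b))).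
  apply: leq_sum => j _; apply: H; rewrite /in_shape !ltn_ord.
  done.
rewrite -big_distrr /= sum_ind_ord; case: (i == a :> nat); case: (b < _); lia.
Qed.

Lemma count_val_zero F v : (forall i j, in_shape F i j -> v \notin cell F i j) ->
  count_val F v = 0.
Proof.
move=> H; rewrite /count_val big1 // => i _; rewrite big1 // => j _.
apply/count_memPn; apply: H; by rewrite /in_shape !ltn_ord.
Qed.

Lemma sum_count_mem (s : seq nat) n : all (fun x => 0 < x <= n) s ->
  size s <= \sum_(v <- iota 1 n) count_mem v s.
Proof.
elim: s => [|x s IH] //= /andP [Hx Hs].
rewrite (eq_bigr (fun v => (x == v) + count_mem v s)); last by move=> v _.
rewrite big_split /=. have := IH Hs.
have Hm : x \in iota 1 n by rewrite mem_iota; lia.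
have : 1 <= \sum_(i <- iota 1 n) (x == i) by rewrite (big_rem x Hm) /= eqxx.
move=> H1 H2; rewrite -add1n; exact: leq_add H1 H2. Qed.
Lemma dummy : True. Proof. 
done. Qed.

Lemma n_entries_le F n :
  (forall i j, in_shape F i j -> all (fun x => 0 < x <= n) (cell F i j)) ->
  n_entries F <= \sum_(v <- iota 1 n) count_val F v.
Proof.
move=> H; rewrite /n_entries /count_val exchange_big /=.
apply: leq_sum => i _; rewrite exchange_big /=; apply: leq_sum => j _.
apply: sum_count_mem; apply: H; by rewrite /in_shape !ltn_ord.
Qed.

Lemma n_entries_ge F : (forall i j, in_shape F i j -> cell F i j != [::]) ->
  \sum_(i < size F) size (nth [::] F i) <= n_entries F.
Proof.
move=> H; rewrite /n_entries; apply: leq_sum => i _.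
apply: (@leq_trans (\sum_(j < size (nth [::] F i)) 1)).
  by rewrite sum1_card card_ord.
apply: leq_sum => j _; rewrite lt0n size_eq0; apply: H; by rewrite /in_shape !ltn_ord.
Qed.

Lemma sum_le_const (s : seq nat) f c : (forall v, v \in s -> f v <= c) ->
  \sum_(v <- s) f v <= c * size s.
Proof.
elim: s => [|x s IH] H; first by rewrite big_nil.
rewrite big_cons /=. have := H x (mem_head _ _).
have := IH (fun v Hv => H v (@mem_behead _ (x :: s) _ Hv)). lia.
Qed.


Lemma dpp_contra n F : 3 <= n -> is_DPP n F ->
  (count_val F 1 = 0 \/ count_val F 1 = 2) -> 1 <= count_val F 2 ->
  (forall v, 0 < v <= n -> count_val F v <= 2 + (v == 2) + (v == 3)) -> False.
Proof.
move=> Hn [[[HP Hfrob] Hcell Habove Hrow Hcolumn] Hsing Hab Hcolk H1] Hc1 Hc2 Hcv.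
have Hin0 t : in_shape F t 0 = (t < size F).
  rewrite /in_shape; case: ltnP => //= Ht; exact: row_pos.
have [HF0 | HFpos] : size F = 0 \/ 0 < size F by lia.
  have : count_val F 2 = 0.
    by apply: count_val_zero => i j /andP [Hi _]; lia.
  lia.
have [d Hd] := Hcolk 0 (durfee_gt HP HFpos (row_pos HP HFpos)).
have Hd0 : 0 < d by apply/(Hd 0).1; rewrite Hin0.
have Hsize : size F = d.
  have A := (Hd (size F)).1; have B := (Hd d).1; rewrite !Hin0 in A B.
  case: (ltngtP (size F) d) => // H.
  - by move: (A.2 H); rewrite ltnn.
  - by move: (B.1 H); rewrite ltnn.
have Hcell0 t : t < d -> cell F t 0 = [:: d - t] by move=> Ht; exact: (Hd t).2.
have Hc1ge : 1 <= count_val F 1.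
  have := count_val_ge 1 (i := d.-1) (j := 0) (F := F); rewrite Hin0 Hsize Hcell0; last by lia.
  have -> : d - d.-1 = 1 by lia.
  by move=> /(_ ltac:(lia)).
have {Hc1 Hc1ge} Hc1 : count_val F 1 = 2 by lia.
have H11 : in_shape F 1 1.
  case: (boolP (in_shape F 1 1)) => // H11.
  have : count_val F 1 <= 1; last by lia.
  apply: (count_val_le_ind (a := d.-1) (b := 0)) => i j Hs.
  case: j Hs => [|j] Hs.
  - move: (Hs); rewrite Hin0 Hsize => Hi; rewrite Hcell0 //=.
    case: (d - i =P 1) => A; case: (i =P d.-1) => B /=; lia.
  - case: (leqP j.+1 i) => Hji.
    + by move: H11; rewrite (in_shape_mono HP Hs (i' := 1) (j' := 1)) //; lia.
    + have := H1 _ _ Hs Hji; move=> /count_memPn ->; done.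
have Hdur2 : 1 < durfee (Defs.shape F).
  apply: durfee_gt => //; move: H11 => /andP [] //.
have Ha0 := Hab 0 ltac:(lia).
rewrite /frob_a /frob_b conjpart0 // nth_shape // Hsize in Ha0.
have Ha1 := Hab 1 Hdur2.
move: H11 => /andP [Hs1 Hr1].
rewrite /frob_a /frob_b nth_shape // in Ha1.
have H12 : in_shape F 1 2. rewrite /in_shape Hs1 /=. lia.
have [Hne _ Hall] := Hcell 1 2 H12.
have H1n := H1 1 2 H12 isT.
have [x Hx] : exists x, x \in cell F 1 2.
  by case: (cell F 1 2) Hne => [|y s] // _; exists y; rewrite mem_head.
have Hx2 : 2 <= x.
  move/allP: Hall => /(_ x Hx) /andP [Hx0 _].
  case: (x =P 1) => Hx1; last by lia.
  by move: Hx; rewrite Hx1 (negbTE H1n).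
have Hmax := Hrow 1 1 H12.
have [d2 Hd2] := Hcolk 1 Hdur2.
have Hd20 : 0 < d2 by apply/(Hd2 0).1; rewrite addn0 /in_shape Hs1.
have Hc11 := (Hd2 0).2 Hd20; rewrite addn0 subn0 in Hc11.
rewrite Hc11 big_seq1 in Hmax.
have Hxm : x <= \max_(y <- cell F 1 2) y by apply: (leq_bigmax_seq (P := xpredT)).
have H21 : in_shape F 2 1 by apply/(Hd2 1).1; lia.
have Hd3 : 3 <= d by move: H21 => /andP []; lia.
have ent : forall i j, in_shape F i j -> forall y, y \in cell F i j -> y <= d.
  elim=> [|i IH] j.
  - elim: j => [|j IHj] Hs y Hy.
    + by move: Hy; rewrite Hcell0 // subn0 inE => /eqP ->.
    + have A := Hrow 0 j Hs.
      have B : \max_(z <- cell F 0 j) z <= d.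
        apply/bigmax_leqP_seq => z Hz _; apply: IHj Hz.
        exact: (in_shape_mono HP Hs).
      have C : y <= \max_(z <- cell F 0 j.+1) z by apply: (leq_bigmax_seq (P := xpredT)).
      lia.
  - move=> Hs y Hy.
    have Hs' : in_shape F i j by apply: (in_shape_mono HP Hs).
    have [Hne' _ _] := Hcell i j Hs'.
    have [z Hz] : exists z, z \in cell F i j.
      by case: (cell F i j) Hne' => [|w s] // _; exists w; rewrite mem_head.
    have := Hcolumn i j z y Hs Hz Hy; have := IH j Hs' z Hz; lia.
have Hdn : d <= n.
  have [_ _ A] := Hcell 0 0 (in_shape_mono HP H12 (i' := 0) (j' := 0) isT isT).
  by move: A; rewrite Hcell0 // subn0 /= andbT => /andP [].
have Hzero v : d < v -> count_val F v = 0.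
  move=> Hv; apply: count_val_zero => i j Hs; apply/negP => Hvin.
  have := ent i j Hs v Hvin; lia.
have Up := n_entries_le (n := n) (F := F) (fun i j Hs => let: And3 _ _ A := Hcell i j Hs in A).
have Lo := n_entries_ge (fun i j Hs => let: And3 A _ _ := Hcell i j Hs in A).
have E1 : \sum_(v <- iota 1 n) count_val F v = \sum_(v <- iota 1 d) count_val F v.
  have -> : n = d + (n - d) by lia.
  rewrite iotaD big_cat /= [X in _ + X]big1_seq ?addn0 // => v /andP [_].
  rewrite mem_iota => Hv; apply: Hzero; lia.
case: d Hd Hd0 Hsize Hcell0 Ha0 Hd3 ent Hdn Hzero E1 => [|[|[|k]]] //.
move=> Hd Hd0 Hsize Hcell0 Ha0 Hd3 ent Hdn Hzero E1.
have U2 : \sum_(v <- iota 1 k.+3) count_val F v <= 2 + 3 + 3 + 2 * k.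
  rewrite /= !big_cons -/(iota 4 k).
  have := Hcv 2 ltac:(lia); have := Hcv 3 ltac:(lia).
  have : \sum_(v <- iota 4 k) count_val F v <= 2 * size (iota 4 k).
    apply: sum_le_const => v; rewrite mem_iota => Hv.
    have := Hcv v ltac:(lia); case: (v =P 2); case: (v =P 3); lia.
  rewrite size_iota /=; lia.
have L2 : 2 * k.+3 + 3 <= \sum_(i < size F) size (nth [::] F i).
  rewrite Hsize -(big_mkord xpredT (fun i => size (nth [::] F i))) big_ltn // big_ltn // big_ltn //.
  have : \sum_(3 <= i < k.+3) 1 <= \sum_(3 <= i < k.+3) size (nth [::] F i).
    rewrite big_nat_cond [X in _ <= X]big_nat_cond.
    apply: leq_sum => i /andP [/andP [_ Hi] _]; apply: row_pos => //; lia.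
  rewrite sum_nat_const_nat.
  move: H21 => /andP [_ H21]. lia.
lia.
Qed.


Lemma sumn_map_nth (s : seq (seq (seq nat))) :
  sumn (map size s) = \sum_(i < size s) size (nth [::] s i).
Proof.
elim: s => [|x s IH] /=; first by rewrite big_ord0.
by rewrite big_ord_recl /= IH.
Qed.

Lemma dpp_w n F : is_DPP n F -> exp_w (sbc_weight n F) = 0%R.
Proof.
move=> [_ Hsing Hab _ _] /=.
have Hc : n_entries F = n_cells F.
  rewrite /n_cells /Defs.shape sumn_map_nth /n_entries; apply: eq_bigr => i _.
  rewrite (eq_bigr (fun _ => 1)); first by rewrite sum1_card card_ord.
  move=> j _; apply: Hsing; by rewrite /in_shape !ltn_ord.
rewrite Hc /W_exp.
rewrite (eq_bigr (fun _ => (-1)%R)); last first.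
  move=> k _; rewrite Hab ?ltn_ord //; lia.
by rewrite sumr_const card_ord addrK mulNrn natz subrr.
Qed.

Theorem mainTheorem5 (n : nat) : 3 <= n ->
  ~ exists Phi : AMT -> SBC,
      [/\ bij_on (is_AMT n) (is_SBC n) Phi,
          (forall T, is_AMT n T -> sbc_weight n (Phi T) = amt_weight n T)
        & exists Psi : SBC -> AMT,
            (* Psi is the inverse Phi^{-1} on the SBCSPPs *)
            (forall D, is_SBC n D -> is_AMT n (Psi D) /\ Phi (Psi D) = D) /\
            bij_on (is_DPP n) (is_MT n) (fun D => forget (Psi D))].
Proof.
move=> Hn [Phi [_ Hw [Psi [HPsi [_ _ Hd3]]]]].
have [D [HD HDm]] := Hd3 (mstar n) (is_MT_mstar Hn).
have HSD : is_SBC n D by case: HD.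
have [HT HPD] := HPsi D HSD.
have Hwt := Hw _ HT; rewrite HPD in Hwt.
have Hww := congr1 exp_w Hwt; rewrite dpp_w // /= in Hww.
have Hwx := congr1 exp_X Hwt; rewrite /= in Hwx.
have HX v : 0 < v <= n -> Posz (count_val D v) = amt_expX (Psi D) v.
  move=> Hv.
  have := congr1 (fun s => nth 0%R s v.-1) Hwx.
  rewrite /= !(nth_map 0) ?size_iota; try lia.
  by rewrite nth_iota; try lia; have -> : 1 + v.-1 = v by lia.
apply: (dpp_contra Hn HD).
- have := X1_cases Hn HDm; have := HX 1 ltac:(lia); lia.
- have := X2_lower Hn HDm; have := HX 2 ltac:(lia); lia.
- move=> v Hv; have := X_upper Hn HT HDm Hv; have := HX v Hv.
  case: (v =P 2); case: (v =P 3); lia.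
Qed.
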